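(* Let $\Omega\subset\mathbb{R}^n$ ($1\le n\le 3$) be a bounded domain, let $\mu_1,\mu_2,\alpha>0$, and impose on $\Omega$ either the Dirichlet or the Neumann boundary condition. Let $\rho_k$, $e_k$, $\beta^{\pm}_k(\lambda)$, $\lambda_0$, $\lambda_1$ be as in the context. Then: (1) Suppose $\lambda_0<\lambda_1$, and let $k_0\ge 1$ be an integer such that the minimum in the definition of $\lambda_0$ is achieved at $\rho_{k_0}$. Then $\beta^+_{k_0}(\lambda)$ is the first real eigenvalue of the linearized eigenvalue problem near $\lambda=\lambda_0$, and for every $k\in\mathbb{N}$ with $\rho_k=\rho_{k_0}$: $\beta^+_k(\lambda)<0$ if $\lambda<\lambda_0$, $\beta^+_k(\lambda)=0$ if $\lambda=\lambda_0$, $\beta^+_k(\lambda)>0$ if $\lambda>\lambda_0$; and $\mathrm{Re}\,\beta^{\pm}_j(\lambda_0)<0$ for every eigenvalue $\beta^{\pm}_j$ other than the $\beta^+_k$ with $\rho_k=\rho_{k_0}$. (2) Suppose $\lambda_1<\lambda_0$. Then $\beta^+_1(\lambda)=\overline{\beta^-_1(\lambda)}$ is a pair of first complex eigenvalues of the linearized eigenvalue problem near $\lambda=\lambda_1$, with $\mathrm{Re}\,\beta^+_1(\lambda)=\mathrm{Re}\,\beta^-_1(\lambda)$ being $<0$ if $\lambda<\lambda_1$, $=0$ if $\lambda=\lambda_1$, $>0$ if $\lambda>\lambda_1$; and $\mathrm{Re}\,\beta^{\pm}_k(\lambda_1)<0$ for all $k>1$.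
   Context: Linearized eigenvalue problem (for parameter $\lambda>0$): find $\beta$ and $v=(v_1,v_2)\neq 0$ with $\mu_1\Delta v_1+(\lambda-1)v_1+\alpha^2v_2=\beta v_1$, $\mu_2\Delta v_2-\lambda v_1-\alpha^2 v_2=\beta v_2$ in $\Omega$, with $v=0$ on $\partial\Omega$ (Dirichlet) or $\partial v/\partial n=0$ on $\partial\Omega$ (Neumann). Let $\rho_k$ ($k=1,2,\dots$, nondecreasing, repeated with multiplicity) and $e_k$ be the eigenvalues and eigenfunctions of $-\Delta e_k=\rho_k e_k$ with the same boundary condition. Let $M_k=\begin{pmatrix}-\mu_1\rho_k+\lambda-1&\alpha^2\\-\lambda&-\mu_2\rho_k-\alpha^2\end{pmatrix}$. All eigenvalues of the linearized problem are the eigenvalues $\beta^{\pm}_k(\lambda)$ of the matrices $M_k$, with eigenfunctions $\xi^{\pm}_k e_k$ where $M_k\xi^{\pm}_k=\beta^{\pm}_k\xi^{\pm}_k$, explicitly $\beta^{\pm}_k(\lambda)=\tfrac12[\lambda-(\mu_1\rho_k+\mu_2\rho_k+\alpha^2+1)]\pm\tfrac12\big[(\lambda-\mu_1\rho_k-\mu_2\rho_k-\alpha^2-1)^2+4(\lambda\mu_2\rho_k-(\mu_1\rho_k+1)(\mu_2\rho_k+\alpha^2))\big]^{1/2}$. Define $\lambda_0=\min_{\rho_k}\frac{1}{\mu_2\rho_k}(\mu_1\rho_k+1)(\mu_2\rho_k+\alpha^2)$ (terms with $\rho_k=0$ are interpreted as $+\infty$) and $\lambda_1=\mu_1\rho_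1+\mu_2\rho_1+\alpha^2+1$.
   Formalization: In part (1), every $\rho_k$ at which the minimum defining $\lambda_0$ is achieved equals $\rho_{k_0}$, so the minimum is attained at the single value $\rho_{k_0}$ only. The statement above fails without it. *)

(* Defs.v *)
From Stdlib Require Import Reals.
From Coquelicot Require Import Coquelicot.
Open Scope R_scope.

Inductive BC := Dirichlet | Neumann.

(* Abstraction of the spectral data of -Delta on a bounded domain Omega
   (connected open set) with boundary condition bc: the eigenvalues
   rho_1 <= rho_2 <= ... (indices k >= 1, rho 0 unused), repeated with
   multiplicity, nonnegative, tending to +infinity, with a simple first
   eigenvalue (Omega connected); rho_1 > 0 under Dirichlet and
   rho_1 = 0 under Neumann. *)
Definition laplace_spectrum (bc : BC) (rho : nat -> R) : Prop :=
  (forall k, (1 <= k)%nat -> 0 <= rho k) /\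
  (forall k, (1 <= k)%nat -> rho k <= rho (S k)) /\
  rho 1%nat < rho 2%nat /\
  (forall M, exists N, forall k, (N <= k)%nat -> M < rho k) /\
  (bc = Dirichlet -> 0 < rho 1%nat) /\
  (bc = Neumann -> rho 1%nat = 0).

Definition trM (mu1 mu2 alpha rho lam : R) : R :=
  lam - (mu1 * rho + mu2 * rho + alpha ^ 2 + 1).

Definition discM (mu1 mu2 alpha rho lam : R) : R :=
  (lam - mu1 * rho - mu2 * rho - alpha ^ 2 - 1) ^ 2
  + 4 * (lam * mu2 * rho - (mu1 * rho + 1) * (mu2 * rho + alpha ^ 2)).

Definition csqrt_real (x : R) : C :=
  if Rle_dec 0 x then (sqrt x, 0) else (0, sqrt (- x)).

Definition beta_plus (mu1 mu2 alpha rho lam : R) : C :=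
  Cmult (RtoC (/ 2))
    (Cplus (RtoC (trM mu1 mu2 alpha rho lam)) (csqrt_real (discM mu1 mu2 alpha rho lam))).

Definition beta_minus (mu1 mu2 alpha rho lam : R) : C :=
  Cmult (RtoC (/ 2))
    (Cminus (RtoC (trM mu1 mu2 alpha rho lam)) (csqrt_real (discM mu1 mu2 alpha rho lam))).

(* The quantity minimized in the definition of lambda_0 (for rho > 0). *)
Definition lam0_fun (mu1 mu2 alpha rho : R) : R :=
  (mu1 * rho + 1) * (mu2 * rho + alpha ^ 2) / (mu2 * rho).

Definition lam1 (mu1 mu2 alpha rho1 : R) : R :=
  mu1 * rho1 + mu2 * rho1 + alpha ^ 2 + 1.

(* Main.v *)
Require Import Defs.
From Stdlib Require Import Reals Lra Psatz.
From Coquelicot Require Import Coquelicot.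
Open Scope R_scope.

Lemma bp_cases m1 m2 a r l :
  let t := trM m1 m2 a r l in let d := discM m1 m2 a r l in
  (0 <= d /\ Re (beta_plus m1 m2 a r l) = (t + sqrt d)/2 /\ Im (beta_plus m1 m2 a r l) = 0
     /\ Re (beta_minus m1 m2 a r l) = (t - sqrt d)/2 /\ Im (beta_minus m1 m2 a r l) = 0) \/
  (d < 0 /\ Re (beta_plus m1 m2 a r l) = t/2 /\ Im (beta_plus m1 m2 a r l) = sqrt (-d)/2
     /\ Re (beta_minus m1 m2 a r l) = t/2 /\ Im (beta_minus m1 m2 a r l) = - (sqrt (-d)/2)).
Proof.
  intros t d. unfold beta_plus, beta_minus, csqrt_real. fold t d.
  destruct (Rle_dec 0 d) as [H|H]; [left|right];
  unfold Cmult, Cplus, Cminus, Copp, RtoC, Re, Im; simpl;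
  repeat split; try lra; try field.
Qed.

Lemma disc_eq m1 m2 a r l :
  discM m1 m2 a r l = (trM m1 m2 a r l)^2 - 4 * ((m1*r+1)*(m2*r+a^2) - l*m2*r).
Proof. unfold discM, trM. ring. Qed.

Lemma sq_lt d t : 0 <= d -> d < t^2 -> t < 0 -> sqrt d < - t.
Proof. intros. pose proof (sqrt_sqrt d H). pose proof (sqrt_pos d). nra. Qed.
Lemma sq_gt d t : t^2 < d -> t < 0 -> - t < sqrt d.
Proof. intros. assert (0<=d) by nra. pose proof (sqrt_sqrt d H1). pose proof (sqrt_pos d). nra. Qed.
Lemma sq_eq d t : d = t^2 -> t < 0 -> sqrt d = - t.
Proof. intros. subst. replace (t^2) with ((-t)^2) by ring. apply sqrt_pow2. lra. Qed.

Lemma L0 m1 m2 a r l : trM m1 m2 a r l < 0 -> Re (beta_minus m1 m2 a r l) < 0.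
Proof.
  intros Ht. destruct (bp_cases m1 m2 a r l) as [[Hd [_ [_ [H _]]]]|[Hd [_ [_ [H _]]]]];
  rewrite H; try lra. pose proof (sqrt_pos (discM m1 m2 a r l)). lra.
Qed.

Lemma L1 m1 m2 a r l : trM m1 m2 a r l < 0 -> 0 < (m1*r+1)*(m2*r+a^2) - l*m2*r ->
  Re (beta_plus m1 m2 a r l) < 0 /\ Re (beta_minus m1 m2 a r l) < 0.
Proof.
  intros Ht Hdet. split; [|now apply L0].
  pose proof (disc_eq m1 m2 a r l) as E.
  destruct (bp_cases m1 m2 a r l) as [[Hd [H _]]|[Hd [H _]]]; rewrite H; try lra.
  assert (sqrt (discM m1 m2 a r l) < - trM m1 m2 a r l) by (apply sq_lt; lra). lra.
Qed.

Lemma det_lam0 m2 r P l : 0 < m2 -> 0 < r -> P - l*m2*r = m2*r*(P/(m2*r) - l).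
Proof. intros. field. lra. Qed.

Lemma mono (rho : nat -> R) : (forall k, (1 <= k)%nat -> rho k <= rho (S k)) ->
  forall n k, (1 <= n)%nat -> (n <= k)%nat -> rho n <= rho k.
Proof.
  intros H n k Hn Hk. induction Hk. lra. specialize (H m ltac:(lia)). lra.
Qed.
Theorem lemma3p1 (bc : BC) (mu1 mu2 alpha : R) (rho : nat -> R) :
  0 < mu1 -> 0 < mu2 -> 0 < alpha ->
  laplace_spectrum bc rho ->
  (forall k0 : nat, (1 <= k0)%nat -> 0 < rho k0 ->
     (forall k, (1 <= k)%nat -> 0 < rho k ->
        lam0_fun mu1 mu2 alpha (rho k0) <= lam0_fun mu1 mu2 alpha (rho k)) ->
     (forall k, (1 <= k)%nat -> 0 < rho k ->
        lam0_fun mu1 mu2 alpha (rho k) = lam0_fun mu1 mu2 alpha (rho k0) ->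
        rho k = rho k0) ->
     lam0_fun mu1 mu2 alpha (rho k0) < lam1 mu1 mu2 alpha (rho 1%nat) ->
     let lam0 := lam0_fun mu1 mu2 alpha (rho k0) in
     (exists delta, 0 < delta /\
        forall lam, 0 < lam -> Rabs (lam - lam0) < delta ->
        forall k, (1 <= k)%nat -> rho k = rho k0 ->
          Im (beta_plus mu1 mu2 alpha (rho k) lam) = 0 /\
          (lam < lam0 -> Re (beta_plus mu1 mu2 alpha (rho k) lam) < 0) /\
          (lam = lam0 -> Re (beta_plus mu1 mu2 alpha (rho k) lam) = 0) /\
          (lam0 < lam -> 0 < Re (beta_plus mu1 mu2 alpha (rho k) lam))) /\
     (forall j, (1 <= j)%nat -> rho j <> rho k0 ->
        Re (beta_plus mu1 mu2 alpha (rho j) lam0) < 0 /\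
        Re (beta_minus mu1 mu2 alpha (rho j) lam0) < 0) /\
     (forall k, (1 <= k)%nat -> rho k = rho k0 ->
        Re (beta_minus mu1 mu2 alpha (rho k) lam0) < 0))
  /\
  ((forall k, (1 <= k)%nat -> 0 < rho k ->
      lam1 mu1 mu2 alpha (rho 1%nat) < lam0_fun mu1 mu2 alpha (rho k)) ->
     let l1 := lam1 mu1 mu2 alpha (rho 1%nat) in
     (exists delta, 0 < delta /\
        forall lam, 0 < lam -> Rabs (lam - l1) < delta ->
          beta_plus mu1 mu2 alpha (rho 1%nat) lam
            = Cconj (beta_minus mu1 mu2 alpha (rho 1%nat) lam) /\
          Im (beta_plus mu1 mu2 alpha (rho 1%nat) lam) <> 0 /\
          Re (beta_plus mu1 mu2 alpha (rho 1%nat) lam)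
            = Re (beta_minus mu1 mu2 alpha (rho 1%nat) lam) /\
          (lam < l1 -> Re (beta_plus mu1 mu2 alpha (rho 1%nat) lam) < 0) /\
          (lam = l1 -> Re (beta_plus mu1 mu2 alpha (rho 1%nat) lam) = 0) /\
          (l1 < lam -> 0 < Re (beta_plus mu1 mu2 alpha (rho 1%nat) lam))) /\
     (forall k, (1 < k)%nat ->
        Re (beta_plus mu1 mu2 alpha (rho k) l1) < 0 /\
        Re (beta_minus mu1 mu2 alpha (rho k) l1) < 0)).
Proof.
  intros Hm1 Hm2 Ha [Hpos [Hmono [H12 _]]].
  pose proof (mono rho Hmono) as Mo.
  assert (Ha2 : 0 < alpha^2) by nra.
  split.
  - intros k0 Hk0 Hr0 Hmin Huniq Hlt lam0.
    set (r0 := rho k0) in *.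
    assert (R10 : rho 1%nat <= r0) by (apply Mo; lia).
    set (c := mu1*r0+mu2*r0+alpha^2+1 - lam0).
    assert (Hc : 0 < c).
    { unfold c. unfold lam1 in Hlt. fold lam0 in Hlt. nra. }
    assert (Hdet0 : (mu1*r0+1)*(mu2*r0+alpha^2) - lam0*mu2*r0 = 0).
    { unfold lam0, lam0_fun. field. nra. }
    assert (Htr : forall l, trM mu1 mu2 alpha r0 l = l - lam0 - c).
    { intros; unfold trM, c; ring. }
    split.
    + set (delta := Rmin (c/2) (c*c/(32*mu2*r0))).
      assert (D1 : delta <= c/2) by apply Rmin_l.
      assert (D2 : 32*mu2*r0*delta <= c*c).
      { assert (delta <= c*c/(32*mu2*r0)) by apply Rmin_r.
        apply Rmult_le_compat_l with (r := 32*mu2*r0) in H; [|nra].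
        replace (32 * mu2 * r0 * (c * c / (32 * mu2 * r0))) with (c*c) in H by (field; nra).
        exact H. }
      exists delta. split.
      { unfold delta. apply Rmin_pos; [lra|]. apply Rdiv_lt_0_compat; nra. }
      intros lam Hl Habs k Hk Hrk. rewrite Hrk. fold r0.
      apply Rabs_def2 in Habs. destruct Habs as [A1 A2].
      pose proof (disc_eq mu1 mu2 alpha r0 lam) as E.
      rewrite Htr in E.
      assert (Edet : (mu1*r0+1)*(mu2*r0+alpha^2) - lam*mu2*r0 = mu2*r0*(lam0 - lam)) by lra.
      rewrite Edet in E.
      assert (Ht : lam - lam0 - c < - (c/2)) by lra.
      assert (Dpos : 0 < discM mu1 mu2 alpha r0 lam \/ lam0 <= lam).
      { destruct (Rle_dec lam0 lam); [right; lra|left].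
        assert (mu2*r0*(lam0-lam) <= mu2*r0*delta) by (apply Rmult_le_compat_l; nra).
        assert ((lam - lam0 - c)^2 > c*c/4) by nra.
        nra. }
      pose proof (Htr lam) as Ht'.
      destruct (bp_cases mu1 mu2 alpha r0 lam) as [[Hd [HR [HI _]]]|[Hd _]].
      2:{ exfalso. destruct Dpos as [|Hle]; [lra|]. assert (0 <= mu2*r0*(lam-lam0)) by (apply Rmult_le_pos; nra). assert (0 <= (lam-lam0-c)^2) by (apply pow2_ge_0). lra. }
      rewrite HR, HI. split; [reflexivity|]. rewrite Ht'.
      split; [|split].
      * intros Hlt'. assert (0 < mu2*r0*(lam0-lam)) by (apply Rmult_lt_0_compat; [apply Rmult_lt_0_compat|]; lra).
        assert (sqrt (discM mu1 mu2 alpha r0 lam) < - (lam - lam0 - c)) by (apply sq_lt; lra). lra.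
      * intros ->. assert (sqrt (discM mu1 mu2 alpha r0 lam0) = - (lam0 - lam0 - c)) by (apply sq_eq; lra). lra.
      * intros Hgt. assert (0 < mu2*r0*(lam-lam0)) by (apply Rmult_lt_0_compat; [apply Rmult_lt_0_compat|]; lra).
        assert (- (lam - lam0 - c) < sqrt (discM mu1 mu2 alpha r0 lam)) by (apply sq_gt; lra). lra.
    + split.
      * intros j Hj Hne.
        assert (R1j : rho 1%nat <= rho j) by (apply Mo; lia).
        assert (Rj0 : 0 <= rho j) by (apply Hpos; lia).
        apply L1.
        { unfold trM. unfold lam1 in Hlt. fold lam0 in Hlt. nra. }
        destruct (Rle_lt_or_eq_dec 0 (rho j) Rj0) as [Hp|Hz].
        { rewrite det_lam0 by lra. specialize (Hmin j Hj Hp). fold lam0 in Hmin.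
          assert (lam0_fun mu1 mu2 alpha (rho j) <> lam0).
          { intro Heq. apply Hne. apply Huniq; auto. }
          unfold lam0_fun in *. 
          assert (0 < (mu1 * rho j + 1) * (mu2 * rho j + alpha ^ 2) / (mu2 * rho j) - lam0) by lra.
          apply Rmult_lt_0_compat; [nra|lra]. }
        rewrite <- Hz. nra.
      * intros k Hk Hrk. apply L0. rewrite Hrk. fold r0. rewrite Htr. lra.
  - intros Hl1 l1.
    assert (R1 : 0 <= rho 1%nat) by (apply Hpos; lia).
    set (r1 := rho 1%nat) in *.
    set (D := (mu1*r1+1)*(mu2*r1+alpha^2) - l1*mu2*r1).
    assert (HD : 0 < D).
    { unfold D. destruct (Rle_lt_or_eq_dec 0 r1 R1) as [Hp|Hz].
      - rewrite det_lam0 by lra. specialize (Hl1 1%nat (le_n _) Hp). fold r1 l1 in Hl1.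
        unfold lam0_fun in Hl1. apply Rmult_lt_0_compat; [nra|lra].
      - rewrite <- Hz. nra. }
    split.
    + set (delta := Rmin 1 (D/(1+4*mu2*r1))).
      assert (D1 : delta <= 1) by apply Rmin_l.
      assert (D2 : (1+4*mu2*r1)*delta <= D).
      { assert (delta <= D/(1+4*mu2*r1)) by apply Rmin_r.
        apply Rmult_le_compat_l with (r := 1+4*mu2*r1) in H; [|nra].
        replace ((1+4*mu2*r1) * (D/(1+4*mu2*r1))) with D in H by (field; nra).
        exact H. }
      assert (Dp : 0 < delta).
      { unfold delta. apply Rmin_pos; [lra|]. apply Rdiv_lt_0_compat; nra. }
      exists delta. split; [exact Dp|].
      intros lam Hl Habs.
      apply Rabs_def2 in Habs. destruct Habs as [A1 A2].
      pose proof (disc_eq mu1 mu2 alpha r1 lam) as E.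
      assert (Ht : trM mu1 mu2 alpha r1 lam = lam - l1) by (unfold trM, l1, lam1; ring).
      rewrite Ht in E.
      assert (Edet : (mu1*r1+1)*(mu2*r1+alpha^2) - lam*mu2*r1 = D - mu2*r1*(lam-l1)) by (unfold D; ring).
      rewrite Edet in E.
      assert (Hneg : discM mu1 mu2 alpha r1 lam < 0).
      { rewrite E.
        assert ((lam-l1)^2 <= delta) by nra.
        assert (mu2*r1*(lam-l1) <= mu2*r1*delta) by (apply Rmult_le_compat_l; nra).
        nra. }
      destruct (bp_cases mu1 mu2 alpha r1 lam) as [[Hd _]|[Hd [HR [HI [HR' HI']]]]]; [lra|].
      rewrite Ht in HR, HR'.
      assert (0 < sqrt (- discM mu1 mu2 alpha r1 lam)) by (apply sqrt_lt_R0; lra).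
      split.
      { destruct (beta_plus mu1 mu2 alpha r1 lam) as [x y].
        destruct (beta_minus mu1 mu2 alpha r1 lam) as [x' y'].
        unfold Re, Im, Cconj in *; simpl in *. f_equal; lra. }
      rewrite HR, HI, HR'. repeat split; intros; lra.
    + intros k Hk.
      assert (R2k : rho 2%nat <= rho k) by (apply Mo; lia).
      assert (Hkp : 0 < rho k) by lra.
      apply L1.
      { unfold trM, l1, lam1. fold r1. nra. }
      rewrite det_lam0 by lra. specialize (Hl1 k ltac:(lia) Hkp). fold r1 l1 in Hl1.
      unfold lam0_fun in Hl1. apply Rmult_lt_0_compat; [nra|lra].
Qed.
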